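(* Let $G$ be a split graph with vertex set partitioned as $I^*\cup K$, where $K$ is a clique and $I^*$ is an independent set with $|I^*|=\alpha(G)$, and let $H$ be a graph. Then $\gamma_{gr}(G\circ H)= |I^*|\gamma_{gr}(H)+n(G)$.
   Context: $\alpha(G)$ is the independence number and $N(v)$ the open neighborhood. $n(G)=1$ if there exist $v,w\in K$ with $N(v)\cap N(w)\cap I^*=\emptyset$, and $n(G)=0$ otherwise. The lexicographic product $G\circ H$ has vertex set $V(G)\times V(H)$, with $(g_1,h_1)$ adjacent to $(g_2,h_2)$ iff $g_1g_2\in E(G)$, or $g_1=g_2$ and $h_1h_2\in E(H)$. $\gamma_{gr}$ is the Grundy domination number: the maximum length of a sequence $(v_1,\dots,v_k)$ of distinct vertices whose set is dominating and such that each $N[v_i]\setminus\bigcup_{j<i}N[v_j]$ is non-empty ($N[\cdot]$ the closed neighborhood). *)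

(* Defs.v *)
From mathcomp Require Import all_boot all_order.
Set Implicit Arguments. Unset Strict Implicit. Unset Printing Implicit Defensive.

Section Graphs.
Variable T : finType.
Implicit Types (e : rel T) (S : {set T}).

Definition simple_graph e := irreflexive e /\ symmetric e.

Definition onbhd e (v : T) : {set T} := [set u | e v u].
Definition cnbhd e (v : T) : {set T} := [set u | (u == v) || e v u].

Definition independent e S := [forall u in S, forall v in S, ~~ e u v].
Definition clique e S := [forall u in S, forall v in S, (u != v) ==> e u v].

Definition alpha e : nat := \max_(S : {set T} | independent e S) #|S|.

Fixpoint footprinting e (covered : {set T}) (s : seq T) : bool :=
  match s with
  | [::] => true
  | v :: s' => ~~ (cnbhd e v \subset covered)
               && footprinting e (covered :|: cnbhd e v) s'
  end.

Definition dominating_seq e (s : seq T) : bool :=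
  [set: T] \subset \bigcup_(v <- s) cnbhd e v.

Definition grundy_dom_seq e (s : seq T) : bool :=
  [&& uniq s, dominating_seq e s & footprinting e set0 s].

(* Grundy domination number: maximum length of a Grundy dominating sequence
   (lengths are bounded by #|T| since the vertices are distinct) *)
Definition grundy_dom e : nat :=
  \max_(k < #|T|.+1 | [exists t : k.-tuple T, grundy_dom_seq e t]) k.

Definition nG e (I K : {set T}) : nat :=
  [exists v in K, exists w in K, onbhd e v :&: onbhd e w :&: I == set0].

End Graphs.

Definition lexprod (T U : finType) (eG : rel T) (eH : rel U) : rel (T * U) :=
  fun x y => eG x.1 y.1 || ((x.1 == y.1) && eH x.2 y.2).

(* Main.v *)
Require Import Defs.
From mathcomp Require Import all_boot all_order.
From mathcomp Require Import zify.
Set Implicit Arguments. Unset Strict Implicit. Unset Printing Implicit Defensive.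

Section Gen.
Variable T : finType.
Variable e : rel T.

Definition phi (C : {set T}) : nat :=
  \max_(k < #|T|.+1 | [exists t : k.-tuple T, footprinting e C t]) k.

Lemma footprint_notin (C : {set T}) s x : footprinting e C s -> x \in s -> ~~ (cnbhd e x \subset C).
Proof.
elim: s C => [|v s IH] C //= /andP[Hv Hs]; rewrite in_cons => /orP[/eqP->//|xs].
apply/negP => sub; move: (IH _ Hs xs); rewrite (subset_trans sub) //; exact: subsetUl.
Qed.

Lemma footprinting_uniq (C : {set T}) s : footprinting e C s -> uniq s.
Proof.
elim: s C => [|v s IH] C //= /andP[Hv Hs]; rewrite (IH _ Hs) andbT.
apply/negP => vs; move: (footprint_notin Hs vs); rewrite subsetUr //.
Qed.

Lemma footprinting_mono (C C' : {set T}) s : C \subset C' -> footprinting e C' s -> footprinting e C s.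
Proof.
elim: s C C' => [|v s IH] C C' //= sub /andP[Hv Hs]; apply/andP; split.
  apply/negP => H; move/negP: Hv; apply; exact: subset_trans H sub.
apply: (IH _ _ _ Hs); exact: setSU.
Qed.

Lemma footprinting_cat (C : {set T}) s1 s2 : footprinting e C (s1 ++ s2) =
  footprinting e C s1 && footprinting e (C :|: \bigcup_(v <- s1) cnbhd e v) s2.
Proof.
elim: s1 C => [|v s1 IH] C /=; first by rewrite big_nil setU0.
by rewrite IH big_cons setUA andbA.
Qed.

Lemma phi_ge (C : {set T}) s : footprinting e C s -> size s <= phi C.
Proof.
move=> Hs; have Hsz : size s < #|T|.+1.
  by have /card_uniqP <- := footprinting_uniq Hs; rewrite ltnS max_card.
apply: (@leq_bigmax_cond _ _ (fun k : 'I_#|T|.+1 => nat_of_ord k) (Ordinal Hsz)).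
by apply/existsP; exists (in_tuple s).
Qed.

Lemma phi_le (C : {set T}) n : (forall s, footprinting e C s -> size s <= n) -> phi C <= n.
Proof.
move=> H; apply/bigmax_leqP => k /existsP[t Ht].
by have := H _ Ht; rewrite size_tuple.
Qed.

Lemma phi_attained (C : {set T}) : exists2 s, footprinting e C s & size s = phi C.
Proof.
rewrite /phi (bigmax_eq_arg (ord0 : 'I_#|T|.+1)); last first.
  by apply/existsP; exists [tuple].
case: arg_maxnP => [|k /existsP[t Ht] _]; first by apply/existsP; exists [tuple].
by exists t; rewrite ?size_tuple.
Qed.

Lemma phi_mono (C C' : {set T}) : C \subset C' -> phi C' <= phi C.
Proof. move=> sub; apply: phi_le => s Hs; apply: phi_ge; exact: footprinting_mono Hs. Qed.

Lemma phi_step (C : {set T}) v : ~~ (cnbhd e v \subset C) -> phi (C :|: cnbhd e v) < phi C.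
Proof.
move=> Hv.
have H1 : 0 < phi C.
  by apply: (@leq_trans (size [:: v])) => //; apply: phi_ge; rewrite /= Hv.
suff : phi (C :|: cnbhd e v) <= (phi C).-1 by lia.
apply: phi_le => s Hs.
have : size (v :: s) <= phi C by apply: phi_ge; rewrite /= Hv Hs.
rewrite /=; lia.
Qed.

Lemma phi_full : phi setT = 0.
Proof.
apply/eqP; rewrite -leqn0; apply: phi_le => -[|v s] //= /andP[H _].
by rewrite subsetT in H.
Qed.

Lemma phi_pos (C : {set T}) : C != setT -> 0 < phi C.
Proof.
move=> HC; have [x xC] : exists x, x \notin C.
  apply/existsP; move: HC; apply: contraR; rewrite negb_exists => /forallP H.
  by apply/eqP/setP => y; rewrite inE; move: (H y); rewrite negbK.
apply: (@leq_trans (size [:: x])) => //; apply: phi_ge; rewrite /= andbT.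
apply/subsetPn; exists x => //; by rewrite /cnbhd inE eqxx.
Qed.

Lemma extend_dom (C : {set T}) : exists s, footprinting e C s &&
   ([set: T] \subset C :|: \bigcup_(v <- s) cnbhd e v).
Proof.
have [n] := ubnP #|~: C|; elim: n C => [|n IH] C // Hn.
case: (boolP ([set: T] \subset C)) => HC.
  by exists [::]; rewrite /= big_nil setU0.
case/subsetPn: HC => x _ xC.
have Hlt : #|~: (C :|: cnbhd e x)| < n.
  rewrite -ltnS; apply: leq_trans Hn; rewrite ltnS.
  apply: proper_card; rewrite properE; apply/andP; split.
    by apply/subsetP => y; rewrite !inE negb_or => /andP[].
  apply/subsetPn; exists x; first by rewrite inE.
  by rewrite inE negbK inE /cnbhd inE eqxx orbT.
have [s /andP[Hs Hd]] := IH _ Hlt.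
exists (x :: s); rewrite /= Hs big_cons setUA Hd andbT.
rewrite andbT; apply/subsetPn; exists x => //; by rewrite /cnbhd inE eqxx.
Qed.

Lemma grundy_phi : grundy_dom e = phi set0.
Proof.
apply/eqP; rewrite eqn_leq; apply/andP; split.
  apply/bigmax_leqP => k /existsP[t /and3P[_ _ Ht]].
  by have := phi_ge Ht; rewrite size_tuple.
apply: phi_le => s Hs.
have [s' /andP[Hs' Hd]] := extend_dom (set0 :|: \bigcup_(v <- s) cnbhd e v).
have Hc : footprinting e set0 (s ++ s') by rewrite footprinting_cat Hs.
have Hsz : size (s ++ s') < #|T|.+1.
  by have /card_uniqP <- := footprinting_uniq Hc; rewrite ltnS max_card.
apply: (@leq_trans (size (s ++ s'))); first by rewrite size_cat leq_addr.
apply: (@leq_bigmax_cond _ _ (fun k : 'I_#|T|.+1 => nat_of_ord k) (Ordinal Hsz)).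
apply/existsP; exists (in_tuple (s ++ s')); rewrite /grundy_dom_seq /= Hc.
rewrite (footprinting_uniq Hc) /dominating_seq big_cat /= -(set0U (\bigcup_(v <- s) _)).
by rewrite andbT.
Qed.

End Gen.

Section Main.
Variables (T U : finType) (eG : rel T) (eH : rel U) (I K : {set T}).
Hypotheses (HG : simple_graph eG) (HH : simple_graph eH) (HU : 0 < #|U|)
  (HIK : I :&: K = set0) (HIKT : I :|: K = [set: T])
  (HK : clique eG K) (HI : independent eG I) (Ha : #|I| = alpha eG).

Local Notation e := (lexprod eG eH).
Local Notation gam := (phi eH set0).

Definition cov (D : {set T * U}) : {set T * U} := \bigcup_(d in D) cnbhd e d.
Definition covL D a : {set U} := [set u | (a, u) \in cov D].
Definition KU (D : {set T * U}) : {set T} := [set k in K | [exists u, (k, u) \in D]].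
Definition pL D a := phi eH (covL D a).
Definition EE D := if KU D == set0 then nG eG I K
   else if #|KU D| == 1 then \sum_(k in KU D) pL D k else 0.
Definition Phi D := \sum_(x in I) pL D x + EE D.

Lemma eGirr g : eG g g = false.
Proof. by case: HG => irr _; apply: irr. Qed.
Lemma eGsym g a : eG g a = eG a g.
Proof. by case: HG => _ sym; apply: sym. Qed.

Lemma IorK x : (x \in I) || (x \in K).
Proof. by rewrite -in_setU HIKT inE. Qed.
Lemma notIK x : x \in I -> x \in K -> False.
Proof. move=> xI xK; have : x \in I :&: K by rewrite inE xI xK.
by rewrite HIK inE. Qed.
Lemma KnotI x : x \in K -> x \notin I.
Proof. by move=> xK; apply/negP => xI; exact: notIK xI xK. Qed.
Lemma notIthenK x : x \notin I -> x \in K.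
Proof. by move: (IorK x); case: (x \in I). Qed.

Lemma cliqueP k a : k \in K -> a \in K -> k != a -> eG k a.
Proof. by move=> kK aK ka; move/forallP: HK => /(_ k); rewrite kK => /forallP/(_ a); rewrite aK ka. Qed.

Lemma indepP x y : x \in I -> y \in I -> eG x y = false.
Proof. by move=> xI yI; move/forallP: HI => /(_ x); rewrite xI => /forallP/(_ y); rewrite yI => /negbTE. Qed.

Lemma has_nbr k : k \in K -> exists2 x, x \in I & eG k x.
Proof.
move=> kK; case: (boolP [exists x in I, eG k x]) => [/existsP[x /andP[xI kx]]|H].
  by exists x.
exfalso.
have Hind : independent eG (k |: I).
  apply/forallP => x; apply/implyP => /setU1P Hx; apply/forallP => y; apply/implyP => /setU1P Hy.
  case: Hx => [->|xI]; case: Hy => [->|yI]; rewrite ?eGirr //.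
  - by apply/negP => ky; move/existsP: H; apply; exists y; rewrite yI ky.
  - by rewrite eGsym; apply/negP => ky; move/existsP: H; apply; exists x; rewrite xI ky.
  - by rewrite indepP.
have : #|k |: I| <= alpha eG.
  exact: (@leq_bigmax_cond _ (fun S : {set T} => independent eG S) (fun S => #|S|) _ Hind).
by rewrite cardsU1 (negbTE (KnotI kK)) -Ha /= ltnn.
Qed.

Lemma nG_false v w : nG eG I K = 0 -> v \in K -> w \in K ->
  exists x, [/\ x \in I, eG v x & eG w x].
Proof.
move=> Hn vK wK; case: (set0Pn (onbhd eG v :&: onbhd eG w :&: I)) => [[x]|H].
  by rewrite !inE => /andP[/andP[vx wx] xI]; exists x.
exfalso; move: Hn; rewrite /nG.
have -> : [exists v0 in K, exists w0 in K, onbhd eG v0 :&: onbhd eG w0 :&: I == set0].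
  apply/existsP; exists v; rewrite vK /=.
  apply/existsP; exists w; rewrite wK /=; apply/eqP/setP => x; rewrite in_set0.
  by apply/negP => Hx; apply: H; exists x.
by [].
Qed.

Lemma gam_pos : 0 < gam.
Proof.
apply: phi_pos; apply/eqP => H; case/card_gt0P: HU => u _.
have : u \in (set0 : {set U}) by rewrite H inE.
by rewrite inE.
Qed.

Lemma in_cnbhd (g a : T) (h u : U) : ((a, u) \in cnbhd e (g, h)) =
  [|| (a == g) && (u == h), eG g a | (g == a) && eH h u].
Proof. by rewrite /cnbhd inE xpair_eqE. Qed.

Lemma cov_add (D : {set T * U}) v : cov (v |: D) = cnbhd e v :|: cov D.
Proof. by rewrite /cov bigcup_setU big_set1. Qed.

Lemma covL_full (D : {set T * U}) d a : d \in D -> eG d.1 a -> covL D a = setT.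
Proof.
case: d => g h dD ga; apply/setP => u; rewrite !inE; apply/bigcupP; exists (g, h) => //.
by rewrite in_cnbhd ga orbT.
Qed.

Lemma covL_src (D : {set T * U}) a u : u \in covL D a -> exists2 d, d \in D & (d.1 == a) || eG d.1 a.
Proof.
rewrite inE => /bigcupP[[g h] dD]; rewrite in_cnbhd => H; exists (g, h) => //=.
by case/or3P: H => [/andP[/eqP -> _]|->|/andP[/eqP -> _]]; rewrite ?eqxx ?orbT.
Qed.

Lemma covL_empty (D : {set T * U}) a : (forall d, d \in D -> (d.1 == a) || eG d.1 a -> False) ->
  covL D a = set0.
Proof.
move=> H; apply/setP => u; rewrite [RHS]inE; apply/negP => /covL_src[d dD Hd]; exact: H dD Hd.
Qed.

Lemma covL_mono (D : {set T * U}) v a : covL D a \subset covL (v |: D) a.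
Proof. by apply/subsetP => u; rewrite !inE cov_add inE => ->; rewrite orbT. Qed.

Lemma covL_own (D : {set T * U}) g h : cnbhd eH h \subset covL ((g, h) |: D) g.
Proof.
apply/subsetP => u; rewrite !inE cov_add inE in_cnbhd eqxx eGirr /= => ->.
by [].
Qed.

Lemma covL_adj (D : {set T * U}) g h a : eG g a -> covL ((g, h) |: D) a = setT.
Proof. by move=> ga; apply: (@covL_full _ (g, h)) => //; rewrite setU11. Qed.

Lemma inKU (D : {set T * U}) d : d \in D -> d.1 \in K -> d.1 \in KU D.
Proof. by case: d => g h dD gK; rewrite inE gK; apply/existsP; exists h. Qed.

Lemma KU_sub (D : {set T * U}) k : k \in KU D -> k \in K.
Proof. by rewrite inE => /andP[]. Qed.

Lemma KU_full (D : {set T * U}) k a : k \in KU D -> eG k a -> covL D a = setT.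
Proof. by rewrite inE => /andP[_ /existsP[u ku]] ka; apply: (@covL_full _ (k, u)). Qed.

Lemma KU_add (D : {set T * U}) g h : KU ((g, h) |: D) = if g \in K then g |: KU D else KU D.
Proof.
apply/setP => k; case: ifP => gK; rewrite !inE.
  case: (eqVneq k g) => [->|kg] /=; first by rewrite gK; apply/existsP; exists h; rewrite setU11.
  by congr (_ && _); apply/existsP/existsP => -[u]; exists u; move: p; rewrite !inE xpair_eqE (negbTE kg).
case: (eqVneq k g) => [->|kg] /=; first by rewrite gK.
by congr (_ && _); apply/existsP/existsP => -[u]; exists u; move: p; rewrite !inE xpair_eqE (negbTE kg).
Qed.


Lemma sum_split (A : {set T}) x0 (p q : T -> nat) c d : x0 \in A ->
  (forall x, q x <= p x) -> q x0 + c <= p x0 + d ->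
  \sum_(x in A) q x + c <= \sum_(x in A) p x + d.
Proof.
move=> xA mono H; rewrite (bigD1 x0) //= [\sum_(x in A) p x](bigD1 x0) //=.
have : \sum_(i in A | i != x0) q i <= \sum_(i in A | i != x0) p i by apply: leq_sum.
lia.
Qed.

Lemma set1_ne0 (x : T) : ([set x] == set0) = false.
Proof. by apply/negbTE/set0Pn; exists x; rewrite in_set1. Qed.

Lemma arith1 a b c d : a < b -> c <= d -> a + (c + 1) <= b + d.
Proof. lia. Qed.
Lemma arith2 a b c d : a <= b -> c < d -> a + (c + 1) <= b + d.
Proof. lia. Qed.

Lemma arith3 n p : 0 < n -> 0 + (0 + 1) <= p + n.
Proof. lia. Qed.
Lemma arith4 c b d : c < b -> 0 + (c + 1) <= b + d.
Proof. lia. Qed.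

Lemma EE_same (D D' : {set T * U}) : KU D' = KU D -> (forall x, pL D' x <= pL D x) ->
  EE D' <= EE D.
Proof.
move=> HK' mono; rewrite /EE HK'; case: ifP => // _; case: ifP => // _.
by apply: leq_sum => x _.
Qed.

Lemma pL_empty (D : {set T * U}) a : covL D a = set0 -> pL D a = gam.
Proof. by rewrite /pL => ->. Qed.

Lemma pL_own_lt (D : {set T * U}) g h : covL D g = set0 -> pL ((g, h) |: D) g < gam.
Proof.
move=> H0; apply: (@leq_ltn_trans (phi eH (set0 :|: cnbhd eH h))).
  by apply: phi_mono; rewrite set0U covL_own.
apply: phi_step; apply/subsetPn; exists h; last by rewrite inE.
by rewrite /cnbhd inE eqxx.
Qed.

Lemma pL_adj0 (D : {set T * U}) g h a : eG g a -> pL ((g, h) |: D) a = 0.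
Proof. by move=> ga; rewrite /pL covL_adj // phi_full. Qed.

Lemma pL_pos (D : {set T * U}) a u : u \notin covL D a -> 0 < pL D a.
Proof. by move=> ua; apply: phi_pos; apply/eqP => Hf; rewrite Hf inE in ua. Qed.

Lemma notfull_KU (D : {set T * U}) a u : u \notin covL D a -> a \in K ->
  forall k, k \in KU D -> k = a.
Proof.
move=> ua aK k kD; apply/eqP; apply/negPn/negP => ka.
have := KU_full kD (cliqueP (KU_sub kD) aK ka); move=> Hf; by rewrite Hf inE in ua.
Qed.

Lemma notfull_KU' (D : {set T * U}) a u : u \notin covL D a ->
  forall k, k \in KU D -> eG k a = false.
Proof. by move=> ua k kD; apply/negP => ka; have Hf := KU_full kD ka; rewrite Hf inE in ua. Qed.

Lemma step (D : {set T * U}) g h : ~~ (cnbhd e (g, h) \subset cov D) ->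
  Phi ((g, h) |: D) < Phi D.
Proof.
move=> Hnew; set D' := (g, h) |: D.
have mono x : pL D' x <= pL D x by apply: phi_mono; apply: covL_mono.
have [[a u] yN yD] := subsetPn Hnew.
have ua : u \notin covL D a by rewrite inE.
rewrite in_cnbhd in yN.
have Hfp : (a = g) \/ (a != g /\ eG g a).
  case/or3P: yN => [/andP[/eqP -> _]| Hga | /andP[/eqP <- _]]; [by left| | by left].
  by right; split=> //; apply/eqP => Hag; move: Hga; rewrite Hag eGirr.
have Hstr : pL D' a < pL D a.
  case: Hfp => [Hag | [_ Hga]].
    subst a; move: yN; rewrite eqxx eGirr /= => yN.
    have Hh : ~~ (cnbhd eH h \subset covL D g).
      by apply/subsetPn; exists u => //; rewrite /cnbhd inE.
    apply: leq_ltn_trans (phi_step Hh); apply: phi_mono.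
    by rewrite subUset covL_mono covL_own.
  by rewrite pL_adj0 //; exact: pL_pos ua.
rewrite /Phi.
suff : \sum_(x in I) pL D' x + (EE D' + 1) <= \sum_(x in I) pL D x + EE D by lia.
case: (boolP (g \in I)) => gI.
  have gK : g \notin K by apply/negP => gK; exact: notIK gI gK.
  have HKU : KU D' = KU D by rewrite KU_add (negbTE gK).
  case: (boolP (a \in I)) => aI.
    apply: (sum_split aI mono); exact: arith1 Hstr (EE_same HKU mono).
  have aK := notIthenK aI.
  have Hga : eG g a.
    by case: Hfp => [Hag|[]//]; move: aI; rewrite Hag gI.
  case: (boolP (KU D == set0)) => KU0.
    have Hg0 : covL D g = set0.
      apply: covL_empty => -[g' h'] dD /= /orP[/eqP Hg'|Hg'].
        subst g'; have Hf := covL_full dD Hga; by rewrite Hf inE in ua.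
      case/orP: (IorK g') => [g'I|g'K]; first by rewrite indepP in Hg'.
      by have := inKU dD g'K; rewrite (eqP KU0) inE.
    apply: (sum_split gI mono).
    rewrite (pL_empty Hg0); exact: arith1 (pL_own_lt h Hg0) (EE_same HKU mono).
  have HKa : KU D = [set a].
    case/set0Pn: KU0 => k0 k0D.
    have Hk0 := notfull_KU ua aK k0D; subst k0.
    apply/setP => k; rewrite in_set1; apply/idP/eqP => [kD|->//].
    by have := notfull_KU ua aK kD.
  have -> : EE D = pL D a by rewrite /EE HKa set1_ne0 cards1 eqxx big_set1.
  have -> : EE D' = pL D' a by rewrite /EE HKU HKa set1_ne0 cards1 eqxx big_set1.
  by apply: arith2 Hstr; apply: leq_sum.
have gK := notIthenK gI.
have HKU : KU D' = g |: KU D by rewrite KU_add gK.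
case: (boolP (KU D == set0)) => KU0.
  have HKU' : KU D' = [set g] by rewrite HKU (eqP KU0) setU0.
  have -> : EE D = nG eG I K by rewrite /EE KU0.
  have -> : EE D' = pL D' g by rewrite /EE HKU' set1_ne0 cards1 eqxx big_set1.
  have [x0 x0I gx0] := has_nbr gK.
  have noK : forall d, d \in D -> d.1 \in K -> False.
    by move=> d dD dK; have := inKU dD dK; rewrite (eqP KU0) inE.
  have adjI : forall d x, d \in D -> x \in I -> eG d.1 x -> False.
    move=> d x dD xI dx; case/orP: (IorK d.1) => [dI|dK].
      by rewrite indepP in dx.
    exact: noK dD dK.
  case: (boolP [exists d in D, eG d.1 g]) => W.
    have [d dD dg] : exists2 d, d \in D & eG d.1 g.
      by case/existsP: W => d /andP[]; exists d.
    have -> : pL D' g = 0.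
      by rewrite /pL (@covL_full D' d) ?phi_full // /D' setU1r.
    have Hga : eG g a.
      case: Hfp => [Hag|[]//]; subst a; by rewrite (covL_full dD dg) inE in ua.
    case: (boolP (a \in I)) => aI.
      by apply: (sum_split aI mono); exact: arith1 Hstr (leq0n _).
    have aK := notIthenK aI.
    case: (eqVneq (nG eG I K) 0) => Hn.
      have [x [xI gx ax]] := nG_false Hn gK aK.
      have Hx0 : covL D x = set0.
        apply: covL_empty => d' dD' /orP[/eqP Hd|Hd].
          have Hda : eG d'.1 a by rewrite Hd eGsym.
          by rewrite (covL_full dD' Hda) inE in ua.
        exact: adjI dD' xI Hd.
      apply: (sum_split xI mono); rewrite Hn (pL_adj0 _ _ gx) (pL_empty Hx0) addn0.
      exact: gam_pos.
    apply: (sum_split x0I mono); rewrite (pL_adj0 _ _ gx0).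
    by apply: arith3; rewrite lt0n.
  have noW : forall d, d \in D -> eG d.1 g -> False.
    by move=> d dD dg; move/negP: W; apply; apply/existsP; exists d; rewrite dD dg.
  have Hg0 : covL D g = set0.
    apply: covL_empty => d dD /orP[/eqP Hd|Hd].
      by move: (noK _ dD); rewrite Hd; apply.
    exact: noW dD Hd.
  have Hx0 : covL D x0 = set0.
    apply: covL_empty => d dD /orP[/eqP Hd|Hd].
      by move: (noW _ dD); rewrite Hd eGsym; apply.
    exact: adjI dD x0I Hd.
  apply: (sum_split x0I mono); rewrite (pL_adj0 _ _ gx0) (pL_empty Hx0).
  exact: arith4 (pL_own_lt h Hg0).
case: (boolP (#|KU D| == 1)) => K1.
  have [k0 Hk0] := cards1P K1.
  have -> : EE D = pL D k0 by rewrite /EE Hk0 set1_ne0 cards1 eqxx big_set1.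
  have k0D : k0 \in KU D by rewrite Hk0 set11.
  have k0K : k0 \in K by apply: (@KU_sub D).
  case: (eqVneq g k0) => [Hgk|Hgk].
    subst k0.
    have -> : EE D' = pL D' g.
      by rewrite /EE HKU Hk0 setUid set1_ne0 cards1 eqxx big_set1.
    case: Hfp => [Hag|[_ Hga]].
      by subst a; apply: arith2 Hstr; apply: leq_sum.
    case: (boolP (a \in I)) => aI.
      by apply: (sum_split aI mono); exact: arith1 Hstr (mono g).
    by rewrite (notfull_KU' ua k0D) in Hga.
  have -> : EE D' = 0.
    have Hne : (g |: [set k0] == set0) = false.
      by apply/negbTE/set0Pn; exists g; rewrite setU11.
    by rewrite /EE HKU Hk0 Hne cards2 Hgk.
  case: Hfp => [Hag|[_ Hga]].
    subst a; have Hc : eG k0 g by apply: cliqueP; rewrite // eq_sym.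
    by rewrite (notfull_KU' ua k0D) in Hc.
  case: (boolP (a \in I)) => aI.
    by apply: (sum_split aI mono); exact: arith1 Hstr (leq0n _).
  have aK := notIthenK aI.
  have Hak := notfull_KU ua aK k0D.
  rewrite -Hak in ua.
  by apply: arith2 (pL_pos ua); apply: leq_sum.
have -> : EE D = 0 by rewrite /EE (negbTE KU0) (negbTE K1).
have K2 : 1 < #|KU D| by rewrite ltn_neqAle eq_sym K1 card_gt0 KU0.
have -> : EE D' = 0.
  have K2' : 1 < #|KU D'|.
    by apply: leq_trans K2 _; rewrite HKU subset_leq_card // subsetUr.
  by move: K2'; rewrite /EE -cards_eq0; case: #|KU D'| => [|[|n]].
case: (boolP (a \in I)) => aI.
  by apply: (sum_split aI mono); exact: arith1 Hstr (leqnn 0).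
exfalso; have aK := notIthenK aI.
have : KU D \subset [set a].
  by apply/subsetP => k kD; rewrite in_set1 (notfull_KU ua aK kD) eqxx.
by move/subset_leq_card; rewrite cards1 leqNgt K2.
Qed.

Lemma cov0 : cov set0 = set0.
Proof. by rewrite /cov big_set0. Qed.

Lemma potential s : forall D, footprinting e (cov D) s -> size s <= Phi D.
Proof.
elim: s => [|[g h] s IH] D //= /andP[Hv Hs].
rewrite setUC -cov_add in Hs.
exact: leq_ltn_trans (IH _ Hs) (step Hv).
Qed.

Lemma Phi0 : Phi set0 = #|I| * gam + nG eG I K.
Proof.
have HK0 : KU set0 = set0.
  apply/setP => k; rewrite inE in_set0; apply/negbTE/negP => /andP[_ /existsP[u]].
  by rewrite in_set0.
rewrite /Phi /EE HK0 eqxx -sum_nat_const; congr (_ + _); apply: eq_bigr => x _.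
by rewrite /pL; congr (phi _ _); apply/setP => u; rewrite !inE cov0 in_set0.
Qed.

Lemma bigcup_seq_mem (s : seq (T * U)) (F : T * U -> {set T * U}) z :
  z \in \bigcup_(v <- s) F v -> exists2 v, v \in s & z \in F v.
Proof.
elim: s => [|v s IH]; first by rewrite big_nil in_set0.
rewrite big_cons in_setU => /orP[H|/IH[v' H1 H2]]; first by exists v; rewrite ?mem_head.
by exists v' => //; rewrite in_cons H1 orbT.
Qed.

Definition blocks (t : seq U) (xs : seq T) : seq (T * U) :=
  flatten (map (fun x => map (pair x) t) xs).

Lemma mem_blocks t xs y : y \in blocks t xs -> exists2 x, x \in xs & exists h, y = (x, h).
Proof.
case/flattenP => l /mapP[x xin ->] /mapP[h _ ->]; exists x => //; by exists h.
Qed.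

Lemma cov_blocks t xs a u : (a, u) \in \bigcup_(v <- blocks t xs) cnbhd e v ->
  exists2 x, x \in xs & exists h, (a, u) \in cnbhd e (x, h).
Proof.
case/bigcup_seq_mem => v /mem_blocks[x xin [h ->]] H; exists x => //; by exists h.
Qed.

Lemma size_blocks t xs : size (blocks t xs) = size xs * size t.
Proof. by elim: xs => //= x xs IH; rewrite size_cat size_map IH mulSn. Qed.

Lemma layer_seq x t : forall (C : {set U}) (X : {set T * U}), footprinting eH C t ->
  (forall u, ((x, u) \in X) = (u \in C)) -> footprinting e X (map (pair x) t).
Proof.
elim: t => [|h t IH] C X //= /andP[Hh Ht] HX.
apply/andP; split.
  case/subsetPn: Hh => u uN uC; apply/subsetPn; exists (x, u); last by rewrite HX.
  by rewrite in_cnbhd eqxx eGirr /=; move: uN; rewrite /cnbhd inE.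
apply: (IH _ _ Ht) => u; rewrite !in_setU HX in_cnbhd eqxx eGirr /=.
by rewrite /cnbhd [u \in [set _ | _]]inE.
Qed.

Lemma blocks_fp t xs : forall (X : {set T * U}), uniq xs -> {subset xs <= I} ->
  (forall x u, x \in xs -> (x, u) \notin X) -> footprinting eH set0 t ->
  footprinting e X (blocks t xs).
Proof.
elim: xs => [|x xs IH] X //= /andP[xn Hu] Hsub HX Ht.
rewrite footprinting_cat; apply/andP; split.
  apply: layer_seq Ht _ => u; rewrite in_set0; apply/negbTE; apply: HX; exact: mem_head.
apply: IH => //.
  by move=> y yin; apply: Hsub; rewrite in_cons yin orbT.
move=> x' u x'in; rewrite in_setU negb_or HX ?in_cons ?x'in ?orbT //=.
have x'x : (x' == x) = false by apply/negbTE; apply: contraNneq xn => <-.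
apply/negP => /bigcup_seq_mem [v /mapP[h _ ->]].
rewrite in_cnbhd x'x [x == x']eq_sym x'x indepP //=.
  exact: Hsub (mem_head _ _).
by apply: Hsub; rewrite in_cons x'in orbT.
Qed.



Lemma lower : exists2 s, footprinting e set0 s & size s = #|I| * gam + nG eG I K.
Proof.
have [t Ht Hsz] := phi_attained eH set0.
case: (eqVneq (nG eG I K) 0) => Hn.
  exists (blocks t (enum I)).
    apply: blocks_fp => //; first exact: enum_uniq.
      by move=> x; rewrite mem_enum.
    by move=> x u _; rewrite in_set0.
  by rewrite size_blocks Hn addn0 Hsz -cardE.
have Hn1 : nG eG I K = 1 by move: Hn; rewrite /nG; case: [exists _ in _, _].
have : [exists v in K, exists w in K, onbhd eG v :&: onbhd eG w :&: I == set0].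
  by move: Hn; rewrite /nG; case: [exists _ in _, _].
case/existsP => v /andP[vK /existsP[w /andP[wK /eqP Hvw]]].
have vw : v != w.
  apply/eqP => Hvw'; subst w; have [x xI vx] := has_nbr vK.
  have : x \in onbhd eG v :&: onbhd eG v :&: I by rewrite !inE vx xI.
  by rewrite Hvw in_set0.
case/card_gt0P: HU => h0 _.
set xs1 := enum (I :\: onbhd eG w).
set xs2 := enum (I :&: onbhd eG w).
exists (blocks t xs1 ++ (v, h0) :: blocks t xs2).
  rewrite footprinting_cat; apply/andP; split.
    apply: blocks_fp => //; first exact: enum_uniq.
      by move=> x; rewrite mem_enum inE => /andP[].
    by move=> x u _; rewrite in_set0.
  rewrite /=; apply/andP; split.
    apply/subsetPn; exists (w, h0); first by rewrite in_cnbhd (cliqueP vK wK vw) orbT.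
    rewrite in_setU in_set0 /=; apply/negP => /cov_blocks[x].
    rewrite /xs1 mem_enum !inE => /andP[wx xI] [h].
    rewrite in_cnbhd -eGsym (negbTE wx) /=.
    have -> : (w == x) = false by apply/negbTE/negP => /eqP Hwx; subst x; exact: notIK xI wK.
    have -> : (x == w) = false by apply/negbTE/negP => /eqP Hwx; subst x; exact: notIK xI wK.
    by [].
  apply: blocks_fp => //; first exact: enum_uniq.
    by move=> x; rewrite /xs2 mem_enum inE => /andP[].
  move=> x u; rewrite /xs2 mem_enum !inE => /andP[xI wx].
  have xv : (x == v) = false by apply/negbTE/negP => /eqP Hxv; subst x; exact: notIK xI vK.
  rewrite !negb_or /=; apply/and3P; split.
  - apply/negP => /cov_blocks[x']; rewrite /xs1 mem_enum !inE => /andP[wx' x'I] [h].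
    have xx' : (x == x') = false by apply/negbTE/negP => /eqP Hxx; subst x'; rewrite wx in wx'.
    by rewrite in_cnbhd xx' [x' == x]eq_sym xx' indepP.
  - by rewrite xpair_eqE xv.
  rewrite [v == x]eq_sym xv andbT; apply/negP => vx.
  have : x \in onbhd eG v :&: onbhd eG w :&: I by rewrite !inE vx wx xI.
  by rewrite Hvw in_set0.
rewrite size_cat /= !size_blocks Hsz Hn1 /xs1 /xs2 -!cardE -(cardsID (onbhd eG w) I).
by rewrite mulnDl addnS addn1 addnC.
Qed.

Lemma main_eq : phi e set0 = #|I| * gam + nG eG I K.
Proof.
apply/eqP; rewrite eqn_leq; apply/andP; split.
  apply: phi_le => s Hs; rewrite -Phi0; apply: potential; by rewrite cov0.
by have [s Hs <-] := lower; exact: phi_ge.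
Qed.

End Main.

Theorem corollary3 (T U : finType) (eG : rel T) (eH : rel U)
  (I K : {set T}) :
  simple_graph eG -> simple_graph eH ->
  0 < #|U| ->
  I :&: K = set0 -> I :|: K = [set: T] ->
  clique eG K -> independent eG I -> #|I| = alpha eG ->
  grundy_dom (lexprod eG eH) = #|I| * grundy_dom eH + nG eG I K.
Proof.
move=> HG HH HU HIK HIKT HK HI Ha.
by rewrite !grundy_phi; apply: main_eq.
Qed.
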